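(* Let $I$ be a real interval centered at $0$ with $[-1,1]\subseteq I$, and let $f\colon I^n\to\mathbb{R}$ be a symmetric quasi-Lovász extension, $f=\check{L}\circ\varphi$, such that $f|_{I_+^n}$ or $f|_{I_-^n}$ is nonconstant. Then the following are equivalent: (i) $f_0$ is oddly homogeneous; (ii) there exists $A\subseteq[n]$ with $f_0(\mathbf{1}_A)\neq 0$; (iii) $\varphi(1)\neq 0$. Moreover, in this case $f_0(x\mathbf{1}_A)=\frac{\varphi(x)}{\varphi(1)}f_0(\mathbf{1}_A)$ for all $x\in I$ and all $A\subseteq[n]$.
   Context: Notation: $[n]=\{1,\ldots,n\}$; $I_+=I\cap[0,\infty[$, $I_-=I\cap\,]-\infty,0]$; $\mathbf{1}_A$ is the indicator tuple of $A\subseteq[n]$, $\mathbf{0}=\mathbf{1}_\varnothing$; for a function $g$, $g_0=g-g(\mathbf{0})$; $\mathbf{x}^+$ has components $\max(x_i,0)$ and $\mathbf{x}^-=(-\mathbf{x})^+$. For $\sigma$ a permutation of $[n]$, $\mathbb{R}^n_\sigma=\{\mathbf{x}: x_{\sigma(1)}\leq\cdots\leq x_{\sigma(n)}\}$, $A^\uparrow_\sigma(i)=\{\sigma(i),\ldots,\sigma(n)\}$, $A^\uparrow_\sigma(n+1)=\varnothing$. The Lovász extension $L_\psi\colon\mathbb{R}^n\to\mathbb{R}$ of $\psi\colon\{0,1\}^n\to\mathbb{R}$ is the function whose restriction to each $\mathbb{R}^n_\sigma$ is the unique affine function agreeing with $\psi$ at the points $\mathbf{1}_{A^\uparrow_\sigma(k)}$,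 $k\in[n+1]$. The symmetric Lovász extension of $\psi$ is $\check{L}_\psi(\mathbf{x})=\psi(\mathbf{0})+L_\psi(\mathbf{x}^+)-L_\psi(\mathbf{x}^-)$; a symmetric Lovász extension is any $\check{L}_\psi$. A symmetric quasi-Lovász extension is $f(\mathbf{x})=\check{L}(\varphi(x_1),\ldots,\varphi(x_n))$ with $\check{L}$ a symmetric Lovász extension and $\varphi\colon I\to\mathbb{R}$ nondecreasing and odd. A function $g\colon I^n\to\mathbb{R}$ ($I$ centered at $0$) is oddly homogeneous if there exists a nondecreasing odd $\phi\colon I\to\mathbb{R}$ with $g(x\mathbf{1}_A)=\phi(x)g(\mathbf{1}_A)$ for all $x\in I$, $A\subseteq[n]$. *)

(* Defs.v *)
From HB Require Import structures.
From mathcomp Require Import all_boot all_order all_algebra all_fingroup.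
Set Implicit Arguments. Unset Strict Implicit. Unset Printing Implicit Defensive.
Import Order.TTheory GRing.Theory Num.Theory.
Local Open Scope ring_scope.

Section Defs.
Variables (R : realFieldType) (n : nat).

(* points of R^n are functions 'I_n -> R; the index set [n] is 'I_n (0-based) *)

Definition ind (A : {set 'I_n}) : 'I_n -> R := fun i => if i \in A then 1 else 0.

Definition vpos (x : 'I_n -> R) : 'I_n -> R := fun i => Num.max (x i) 0.
Definition vneg (x : 'I_n -> R) : 'I_n -> R := vpos (fun i => - x i).

Definition in_cone (s : 'S_n) (x : 'I_n -> R) : Prop :=
  forall i j : 'I_n, (i <= j)%N -> x (s i) <= x (s j).

(* A^up_sigma(k) = {sigma k, ..., sigma (n-1)}, for k = 0..n; k = n gives the empty set *)
Definition Aup (s : 'S_n) (k : nat) : {set 'I_n} := [set s i | i : 'I_n & (k <= i)%N].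

(* L is the Lovász extension of psi : {0,1}^n -> R (pseudo-Boolean functions are
   seen as functions on subsets of [n]): on each cone R^n_sigma, L coincides with
   an affine function agreeing with psi at the points 1_{A^up_sigma(k)}. *)
Definition is_Lovasz_ext (psi : {set 'I_n} -> R) (L : ('I_n -> R) -> R) : Prop :=
  forall s : 'S_n, exists (c : R) (w : 'I_n -> R),
    (forall x, in_cone s x -> L x = c + \sum_(i < n) w i * x i) /\
    (forall k : nat, (k <= n)%N ->
       c + \sum_(i < n) w i * ind (Aup s k) i = psi (Aup s k)).

Definition sym_Lovasz (psi : {set 'I_n} -> R) (L : ('I_n -> R) -> R)
  (x : 'I_n -> R) : R := psi set0 + L (vpos x) - L (vneg x).

Definition in_dom (I : pred R) (x : 'I_n -> R) : Prop := forall i, I (x i).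

Definition nondecr_on (I : pred R) (phi : R -> R) : Prop :=
  forall x y, I x -> I y -> x <= y -> phi x <= phi y.

Definition odd_on (I : pred R) (phi : R -> R) : Prop :=
  forall x, I x -> phi (- x) = - phi x.

Definition zeroed (g : ('I_n -> R) -> R) : ('I_n -> R) -> R :=
  fun x => g x - g (fun _ => 0).

Definition oddly_homogeneous (I : pred R) (g : ('I_n -> R) -> R) : Prop :=
  exists phi : R -> R, nondecr_on I phi /\ odd_on I phi /\
    forall (x : R) (A : {set 'I_n}), I x ->
      g (fun i => x * ind A i) = phi x * g (ind A).

Definition nonconst_on (D : ('I_n -> R) -> Prop) (g : ('I_n -> R) -> R) : Prop :=
  exists x y, D x /\ D y /\ g x <> g y.

End Defs.
Arguments ind {R n} A i.

(* Main.v *)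
Require Import Defs.
From HB Require Import structures.
From mathcomp Require Import all_boot all_order all_algebra all_fingroup.
Import Order.TTheory GRing.Theory Num.Theory.
Local Open Scope ring_scope.
From Stdlib Require Import FunctionalExtensionality.
Lemma sort_cone (R : realFieldType) (n : nat) (x : 'I_n -> R) :
  exists s : 'S_n, in_cone s x.
Proof.
case: n x => [|m] x.
  by exists 1%g => i; case: i.
pose r := fun i j : 'I_m.+1 => x i <= x j.
pose ss := sort r (enum 'I_m.+1).
have hsz : size ss = m.+1 by rewrite size_sort size_enum_ord.
have hu : uniq ss by rewrite sort_uniq enum_uniq.
pose g := fun i : 'I_m.+1 => nth ord0 ss i.
have ginj : injective g.
  move=> i j /eqP; rewrite /g nth_uniq ?hsz //.
  by move/eqP/val_inj.
exists (perm ginj) => i j hij.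
rewrite !permE /g.
have hs : sorted r ss by apply: sort_sorted => a b; apply: le_total.
apply: (sorted_leq_nth (leT := r)) => //.
- by move=> a b c; apply: le_trans.
- by move=> a; apply: lexx.
- by rewrite inE hsz.
- by rewrite inE hsz.
Qed.
Lemma up_perm (R : realFieldType) (n : nat) (A : {set 'I_n}) :
  exists (s : 'S_n) (k : nat), (k <= n)%N /\ Aup s k = A /\ in_cone s (@ind R n A).
Proof.
have [s hs] := @sort_cone R n (@ind R n A).
pose P := fun k : nat => (k == n) || [exists i : 'I_n, (i == k :> nat) && (s i \in A)].
have exP : exists k, P k by exists n; rewrite /P eqxx.
case: (ex_minnP exP) => k Pk kmin.
exists s, k; split; last split => //.
  case/orP: Pk => [/eqP -> //|/existsP [i /andP [/eqP <- _]]].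
  exact: ltnW.
apply/setP => a; apply/imsetP/idP.
- case=> i; rewrite inE => ki ->.
  case/orP: Pk => [/eqP kn|/existsP [j /andP [/eqP jk sj]]].
    by move: (ltn_ord i); rewrite ltnNge; move: ki; rewrite kn => ->.
  have := hs j i; rewrite jk => /(_ ki).
  rewrite /ind sj; case: (s i \in A) => //.
  by rewrite leNgt ltr01.
- move=> aA; exists ((s^-1)%g a); last by rewrite permKV.
  rewrite inE; apply: kmin; apply/orP; right; apply/existsP.
  by exists ((s^-1)%g a); rewrite eqxx permKV aA.
Qed.
Section L.
Variables (R : realFieldType) (n : nat) (psi : {set 'I_n} -> R) (L : ('I_n -> R) -> R).
Hypothesis hL : is_Lovasz_ext psi L.

Lemma ind_Aup (s : 'S_n) k j : @ind R n (Aup s k) (s j) = if (k <= j)%N then 1 else 0.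
Proof. by rewrite /ind /Aup mem_imset ?inE //; apply: perm_inj. Qed.

Lemma Aup_n (s : 'S_n) : Aup s n = set0.
Proof.
apply/setP => a; rewrite inE; apply/imsetP => -[i]; rewrite inE => hi _.
by move: (ltn_ord i); rewrite ltnNge hi.
Qed.

Lemma c_eq (s : 'S_n) c (w : 'I_n -> R) :
  (forall k : nat, (k <= n)%N ->
       c + \sum_(i < n) w i * ind (Aup s k) i = psi (Aup s k)) -> c = psi set0.
Proof.
move=> /(_ n (leqnn n)); rewrite Aup_n => <-.
rewrite big1 ?addr0 // => i _; by rewrite /ind inE mulr0.
Qed.

Lemma L_hom (A : {set 'I_n}) t : 0 <= t ->
  L (fun i => t * ind A i) = psi set0 + t * (psi A - psi set0).
Proof.
move=> t0.
have [s [k [kn [hA hc]]]] := @up_perm R n A.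
have [c [w [hx hk]]] := hL s.
have ce := @c_eq s c w hk.
rewrite hx; last by move=> i j ij; apply: ler_wpM2l => //; apply: hc.
have := hk k kn; rewrite hA => <-.
rewrite ce addrAC subrr add0r; congr (_ + _).
rewrite mulr_sumr; apply: eq_bigr => i _; by rewrite mulrCA.
Qed.

Lemma L0 : L (fun _ => 0) = psi set0.
Proof.
have := @L_hom set0 0 (lexx 0); rewrite mul0r addr0.
have -> : (fun i => 0 * @ind R n set0 i) = (fun _ => 0).
  by apply: FunctionalExtensionality.functional_extensionality => i; rewrite mul0r.
by [].
Qed.

Lemma L_const : (forall A, psi A = psi set0) -> forall y, L y = psi set0.
Proof.
move=> hc y.
have [s hs] := @sort_cone R n y.
have [c [w [hx hk]]] := hL s.
have ce := @c_eq s c w hk.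
have hsum : forall k, (k <= n)%N -> \sum_(j < n | (k <= j)%N) w (s j) = 0.
  move=> k kn; have e := hk k kn; rewrite hc -ce in e.
  have h0 : \sum_(i < n) w i * ind (Aup s k) i = 0 by apply: (@addrI _ c); rewrite addr0.
  apply: (etrans _ h0); rewrite [RHS](reindex_inj (@perm_inj _ s)) /= [LHS]big_mkcond /=.
  apply: eq_bigr => j _.
  by rewrite ind_Aup; case: ifP; rewrite ?mulr1 ?mulr0.
have w0 : forall j : 'I_n, w (s j) = 0.
  move=> j; have := hsum j (ltnW (ltn_ord j)).
  rewrite (bigD1 j) //=.
  rewrite (eq_bigl (fun i : 'I_n => (j.+1 <= i)%N)); last first.
    by move=> i /=; rewrite ltn_neqAle andbC; congr (_ && _); rewrite eq_sym.
  by rewrite hsum ?addr0.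
rewrite hx // ce big1 ?addr0 // => i _.
by rewrite -(permKV s i) w0 mul0r.
Qed.
End L.
Arguments L0 {R n psi L} hL.
Arguments L_hom {R n psi L} hL A t _.
Arguments L_const {R n psi L} hL _ y.

Section Main.
Variables (R : realFieldType) (n : nat) (I : pred R)
    (phi : R -> R) (psi : {set 'I_n} -> R) (L : ('I_n -> R) -> R)
    (f : ('I_n -> R) -> R).
Hypotheses (I1 : forall x, -1 <= x -> x <= 1 -> I x)
  (hL : is_Lovasz_ext psi L) (hodd : odd_on I phi)
  (hf : forall x, in_dom I x -> f x = sym_Lovasz psi L (fun i => phi (x i))).

Lemma I0 : I 0. Proof. by apply: I1; rewrite ?oppr_le0 ?ler01. Qed.
Lemma I1' : I 1. Proof. apply: I1 => //; apply: (le_trans (lerN10 _)); exact: ler01. Qed.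

Lemma phi0 : phi 0 = 0.
Proof.
have := hodd 0 I0; rewrite oppr0 => /eqP; rewrite -subr_eq0 opprK.
by rewrite -mulr2n mulrn_eq0 /= => /eqP.
Qed.

Lemma vpos0 : vpos (fun _ : 'I_n => (0:R)) = (fun _ => 0).
Proof. by apply: functional_extensionality => i; rewrite /vpos maxxx. Qed.

Lemma vneg0 : vneg (fun _ : 'I_n => (0:R)) = (fun _ => 0).
Proof. rewrite /vneg. under [fun i => - _]functional_extensionality => i do rewrite oppr0.
 exact: vpos0. Qed.

Lemma f_phi0 x : in_dom I x -> (forall i, phi (x i) = 0) -> f x = psi set0.
Proof.
move=> hx h; rewrite hf //.
have -> : (fun i => phi (x i)) = (fun _ => 0) by apply: functional_extensionality.
by rewrite /sym_Lovasz vpos0 vneg0 (L0 hL) addrK.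
Qed.

Lemma f0 : f (fun _ => 0) = psi set0.
Proof. by apply: f_phi0 => [i|i]; [exact: I0 | exact: phi0]. Qed.

Lemma F x A : I x ->
  zeroed f (fun i => x * ind A i) = phi x * (psi A - psi set0).
Proof.
move=> Ix; rewrite /zeroed f0 hf; last first.
  by move=> i; rewrite /ind; case: (i \in A); rewrite ?mulr1 ?mulr0 //; exact: I0.
have -> : (fun i => phi (x * ind A i)) = (fun i => phi x * ind A i).
  apply: functional_extensionality => i; rewrite /ind.
  by case: (i \in A); rewrite ?mulr1 ?mulr0 ?phi0.
rewrite /sym_Lovasz.
have [h|h] := leP 0 (phi x).
  have -> : vpos (fun i => phi x * ind A i) = (fun i => phi x * ind A i).
    apply: functional_extensionality => i; rewrite /vpos max_l //.
    by rewrite /ind; case: (i \in A); rewrite ?mulr1 ?mulr0.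
  have -> : vneg (fun i => phi x * ind A i) = (fun _ => 0).
    apply: functional_extensionality => i; rewrite /vneg /vpos max_r //.
    by rewrite oppr_le0 /ind; case: (i \in A); rewrite ?mulr1 ?mulr0.
  rewrite (L_hom hL _ _ h) (L0 hL).
  by rewrite [psi set0 + (_ + _)]addrC addrK [_ + _ - _]addrC addKr.
have -> : vpos (fun i => phi x * ind A i) = (fun _ => 0).
  apply: functional_extensionality => i; rewrite /vpos max_r //.
  by rewrite /ind; case: (i \in A); rewrite ?mulr1 ?mulr0 // ltW.
have -> : vneg (fun i => phi x * ind A i) = (fun i => (- phi x) * ind A i).
  apply: functional_extensionality => i; rewrite /vneg /vpos max_l ?mulNr //.
  by rewrite -mulNr /ind; case: (i \in A); rewrite ?mulr1 ?mulr0 // oppr_ge0 ltW.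
rewrite (L0 hL) (L_hom hL _ (- phi x)); last by rewrite oppr_ge0 ltW.
by rewrite mulNr opprD opprK -!addrA addNKr [_ - psi set0]addrC addNKr.
Qed.
End Main.
Theorem proposition7 (R : realFieldType) (n : nat) (I : pred R)
    (phi : R -> R) (psi : {set 'I_n} -> R) (L : ('I_n -> R) -> R)
    (f : ('I_n -> R) -> R) :
  (* I is a real interval centered at 0 containing [-1,1] *)
  (forall x y z, I x -> I z -> x <= y -> y <= z -> I y) ->
  (forall x, I x -> I (- x)) ->
  (forall x, -1 <= x -> x <= 1 -> I x) ->
  (* f = Lcheck o phi is a symmetric quasi-Lovász extension on I^n *)
  is_Lovasz_ext psi L ->
  nondecr_on I phi -> odd_on I phi ->
  (forall x, in_dom I x -> f x = sym_Lovasz psi L (fun i => phi (x i))) ->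
  (* f restricted to I_+^n or to I_-^n is nonconstant *)
  (nonconst_on (fun x => in_dom I x /\ forall i, 0 <= x i) f \/
   nonconst_on (fun x => in_dom I x /\ forall i, x i <= 0) f) ->
  ((oddly_homogeneous I (zeroed f) <-> exists A : {set 'I_n}, zeroed f (ind A) <> 0) /\
   ((exists A : {set 'I_n}, zeroed f (ind A) <> 0) <-> phi 1 <> 0)) /\
  (phi 1 <> 0 -> forall (x : R) (A : {set 'I_n}), I x ->
     zeroed f (fun i => x * ind A i) = phi x / phi 1 * zeroed f (ind A)).
Proof.
move=> Iconv Ineg hI1 hL hmon hodd hf hnc.
have Fm := @F _ _ _ _ _ _ _ hI1 hL hodd hf.
have I0' := @I0 _ _ hI1.
have I11 := @I1' _ _ hI1.
have ph0 := @phi0 _ _ _ hI1 hodd.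
have ind1 : forall A, (fun i => 1 * @ind R n A i) = ind A.
  by move=> A; apply: functional_extensionality => i; rewrite mul1r.
have F1 : forall A, zeroed f (ind A) = phi 1 * (psi A - psi set0).
  by move=> A; rewrite -ind1 Fm.
have fc : ~ (forall x, in_dom I x -> f x = psi set0).
  move=> h; case: hnc => -[x [y [[hx _] [[hy _] ne]]]]; apply: ne; by rewrite !h.
have hD : exists A, psi A - psi set0 != 0.
  case: (boolP [exists A, psi A - psi set0 != 0]) => [/existsP //|/existsPn h].
  exfalso; apply: fc => x hx.
  have Hpsi : forall A, psi A = psi set0.
    by move=> A; move/negPn: (h A); rewrite subr_eq0 => /eqP.
  have Lc := L_const hL Hpsi.
  by rewrite hf // /sym_Lovasz !Lc addrK.
have p1 : phi 1 <> 0 -> 0 < phi 1.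
  move=> h1; rewrite lt_def; apply/andP; split; first by apply/eqP.
  by rewrite -ph0; apply: hmon => //; exact: ler01.
have iii_ii : (exists A, zeroed f (ind A) <> 0) <-> phi 1 <> 0.
  split.
    by move=> [A hA] h1; apply: hA; rewrite F1 h1 mul0r.
  move=> h1; case: hD => A hA; exists A; rewrite F1; apply/eqP.
  by rewrite mulf_neq0 //; apply/eqP.
have form : phi 1 <> 0 -> forall x A, I x ->
    zeroed f (fun i => x * ind A i) = phi x / phi 1 * zeroed f (ind A).
  move=> h1 x A Ix; rewrite Fm // F1 mulrA divfK //; exact/eqP.
split; [split => //|exact: form].
split.
- case=> g [_ [_ hg]]; apply/iii_ii => h1.
  case: hD => A hA; apply: fc => y hy.
  apply: (@f_phi0 _ _ _ _ _ _ _ hL hf) => // i.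
  have := hg (y i) A (hy i); rewrite Fm ?hy // F1 h1 mul0r mulr0 => /eqP.
  by rewrite mulf_eq0 (negbTE hA) orbF => /eqP.
- move=> hii; have h1 := iii_ii.1 hii.
  exists (fun x => phi x / phi 1); split; [|split].
  + move=> x y Ix Iy xy; apply: ler_wpM2r; first by rewrite invr_ge0 ltW // p1.
    exact: hmon.
  + by move=> x Ix; rewrite hodd // mulNr.
  + exact: form h1.
Qed.
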